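(* Let $\mathcal{D}=(\Omega,\mathcal{B})$ be a supersimple $2$-$(n,4,\lambda)$ design satisfying property $(\triangle)$, such that $(\Omega,\mathcal{C})$ is a regular two-graph where $\mathcal{C}$ is the set of collinear triples, and let $\mathcal{E}:=\{[a,b]\mid a,b\in\Omega\}$. Then $[x,y]^g=[x^g,y^g]$ for all $g\in\langle\mathcal{E}\rangle$ and all $x,y\in\Omega$.
   Context: A $2$-$(n,4,\lambda)$ design $(\Omega,\mathcal{B})$: $n$ points, a multiset of $4$-subsets (lines), every $2$-subset in exactly $\lambda$ lines; supersimple: distinct lines meet in at most two points. For distinct $a,b$ with lines $\{a,b,a_i,b_i\}$ through them, $[a,b]:=(a,b)\prod_i(a_i,b_i)\in\operatorname{Sym}(\Omega)$; $[a,a]:=1$. Permutations act on the right, products composed left to right, $g^h=h^{-1}gh$. Property $(\triangle)$: if $B_1,B_2\in\mathcal{B}$ with $|B_1\cap B_2|=2$ then $B_1\triangle B_2\in\mathcal{B}$. Regular two-graph: $(\Omega,\mathcal{C})$ is a $2$-$(n,3,\mu)$ design with every $4$-subset containing $0,2$ or $4$ members of $\mathcal{C}$. *)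

(* Defs.v *)
From mathcomp Require Import all_boot all_fingroup.
Set Implicit Arguments. Unset Strict Implicit. Unset Printing Implicit Defensive.
Local Open Scope group_scope.

Section Design.
Variable T : finType.

(* A block system is a multiset of blocks, represented as a sequence. *)
Definition is_2design_4 (B : seq {set T}) (lam : nat) : Prop :=
  (forall L, L \in B -> #|L| = 4) /\
  (forall a b : T, a != b ->
     count (fun L : {set T} => (a \in L) && (b \in L)) B = lam).

Definition supersimple (B : seq {set T}) : Prop :=
  forall i j, i < size B -> j < size B -> i != j ->
    #|nth set0 B i :&: nth set0 B j| <= 2.

Definition prop_triangle (B : seq {set T}) : Prop :=
  forall B1 B2, B1 \in B -> B2 \in B -> #|B1 :&: B2| = 2 ->
    (B1 :\: B2) :|: (B2 :\: B1) \in B.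

Definition collinear_triples (B : seq {set T}) : {set {set T}} :=
  [set S : {set T} | (#|S| == 3) && has (fun L : {set T} => S \subset L) B].

Definition regular_two_graph (C : {set {set T}}) : Prop :=
  (forall S, S \in C -> #|S| = 3) /\
  (exists mu : nat, forall a b : T, a != b ->
      #|[set S in C | (a \in S) && (b \in S)]| = mu) /\
  (forall F : {set T}, #|F| = 4 ->
      #|[set S in C | S \subset F]| \in [:: 0; 2; 4]%N).

Definition swap2 (d : T) (S : {set T}) : {perm T} :=
  let u := odflt d [pick z in S] in
  let v := odflt d [pick z in S :\ u] in
  tperm u v.

(* [a,b] := (a,b) * prod_i (a_i,b_i) over lines {a,b,a_i,b_i} through a,b;
   [a,a] := 1.  Permutations act on the right (mathcomp convention). *)
Definition brk (B : seq {set T}) (a b : T) : {perm T} :=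
  if a == b then 1
  else tperm a b *
       \prod_(L <- B | (a \in L) && (b \in L)) swap2 a (L :\: [set a; b]).

Definition brkset (B : seq {set T}) : {set {perm T}} :=
  [set brk B a b | a in T, b in T].

End Design.

(* Main.v *)
Require Import Defs.
From mathcomp Require Import all_boot all_fingroup.
Set Implicit Arguments. Unset Strict Implicit. Unset Printing Implicit Defensive.
Local Open Scope group_scope.

Ltac splitb := repeat match goal with H : is_true (_ && _) |- _ => case/andP: H => ? ? end.
Ltac symneqs := repeat match goal with
 | H : is_true (?x != ?y) |- _ =>
   lazymatch goal with | _ : is_true (y != x) |- _ => fail | _ => have ? : y != x by rewrite eq_sym end end.
Ltac unq H := let H' := fresh in move: (H) => /= H'; rewrite ?inE ?negb_or in H'; splitb; symneqs.
Ltac kill := repeat match goal with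
 | H : is_true (?x != ?y) |- context [?x == ?y] => rewrite (negbTE H) end.
Ltac utac := symneqs; rewrite /= ?inE ?(inj_eq perm_inj); kill; done.

Lemma card3 (T : finType) (x y z : T) : uniq [:: x; y; z] -> #|[set x; y; z]| = 3.
Proof.
move=> U; have <- : size [:: x; y; z] = 3 by [].
rewrite -(card_uniqP U); apply: eq_card => t; by rewrite !inE orbA.
Qed.

Lemma card4 (T : finType) (x y z w : T) : uniq [:: x; y; z; w] -> #|[set x; y; z; w]| = 4.
Proof.
move=> U; have <- : size [:: x; y; z; w] = 4 by [].
rewrite -(card_uniqP U); apply: eq_card => t; by rewrite !inE !orbA.
Qed.

Lemma setneq (T : finType) (A C : {set T}) w : w \notin A -> w \in C -> A != C.
Proof. by move=> wA wC; apply/eqP => E; rewrite E wC in wA. Qed.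

Section Gen.
Variable T : finType.
Variable B : seq {set T}.
Hypothesis H4 : forall L, L \in B -> #|L| = 4.
Hypothesis Hss : forall L1 L2, L1 \in B -> L2 \in B -> L1 != L2 -> #|L1 :&: L2| <= 2.
Hypothesis Htri : prop_triangle B.
Hypothesis H2g : forall F : {set T}, #|F| = 4 ->
      #|[set S in collinear_triples B | S \subset F]| \in [:: 0; 2; 4]%N.

Definition col3 x y z := has (fun L : {set T} => [&& x \in L, y \in L & z \in L]) B.
Definition col4 x y z w := has (fun L : {set T} => [&& x \in L, y \in L, z \in L & w \in L]) B.

Lemma sub_card (L : {set T}) (s : seq T) : uniq s -> {subset s <= L} -> size s <= #|L|.
Proof. move=> us sL; rewrite -(card_uniqP us); apply: subset_leq_card; exact/subsetP. Qed.

Lemma line_notin L u p q r s : L \in B -> uniq [:: u; p; q; r; s] ->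
  p \in L -> q \in L -> r \in L -> s \in L -> u \notin L.
Proof.
move=> LB us pL qL rL sL; apply/negP => uL.
have : size [:: u; p; q; r; s] <= #|L|.
  apply: sub_card => // t; rewrite !inE => /or4P [/eqP->|/eqP->|/eqP->|/orP[/eqP->|/eqP->]] //.
by rewrite H4.
Qed.

Lemma line_eq3 L1 L2 x y z : L1 \in B -> L2 \in B -> uniq [:: x; y; z] ->
  x \in L1 -> y \in L1 -> z \in L1 -> x \in L2 -> y \in L2 -> z \in L2 -> L1 = L2.
Proof.
move=> L1B L2B u x1 y1 z1 x2 y2 z2; apply/eqP; apply: contraT => ne.
have : size [:: x; y; z] <= #|L1 :&: L2|.
  apply: (sub_card u) => t; rewrite !inE => /or3P[]/eqP->; apply/andP; split => //.
by move=> h; have := leq_trans h (Hss L1B L2B ne).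
Qed.


Lemma tri x y u v w z : col4 x y u v -> col4 x y w z -> uniq [:: x; y; u; v; w; z] ->
  col4 u v w z.
Proof.
case/hasP=> L1 L1B /and4P[x1 y1 u1 v1]; case/hasP=> L2 L2B /and4P[x2 y2 w2 z2] U.
unq U.
have u2 : u \notin L2 by apply: (line_notin L2B _ x2 y2 w2 z2); utac.
have v2 : v \notin L2 by apply: (line_notin L2B _ x2 y2 w2 z2); utac.
have w1 : w \notin L1 by apply: (line_notin L1B _ x1 y1 u1 v1); utac.
have z1 : z \notin L1 by apply: (line_notin L1B _ x1 y1 u1 v1); utac.
have ne : L1 != L2 by apply/eqP => E; move: u2; rewrite -E u1.
have c2 : #|L1 :&: L2| = 2.
  apply/eqP; rewrite eqn_leq Hss //=.
  have -> : 2 = size [:: x; y] by [].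
  apply: sub_card; first by utac.
  by move=> t; rewrite !inE => /orP[]/eqP->; apply/andP; split.
have := Htri L1B L2B c2 => HD; apply/hasP; exists ((L1 :\: L2) :|: (L2 :\: L1)) => //.
by rewrite !inE u1 v1 w2 z2 (negbTE u2) (negbTE v2) (negbTE w1) (negbTE z1) /= ?orbT.
Qed.

Lemma fourth L x y z : L \in B -> uniq [:: x; y; z] -> x \in L -> y \in L -> z \in L ->
  exists2 w, w \in L & uniq [:: x; y; z; w].
Proof.
move=> LB U xL yL zL.
have : ~~ (L \subset [:: x; y; z]).
  apply/negP => /subset_leq_card; rewrite H4 // (card_uniqP U) //.
case/subsetPn => w wL wn; exists w => //.
move: wn; rewrite !inE !negb_or => /and3P[wx wy wz]; unq U; utac.
Qed.

Lemma col3_col4 x y z w : col4 x y z w -> col3 x y z.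
Proof. by case/hasP=> L LB /and4P[? ? ? ?]; apply/hasP; exists L => //; apply/and3P. Qed.

Lemma col3C x y z : col3 x y z = col3 y x z.
Proof. by apply/hasP/hasP => -[L LB /and3P[? ? ?]]; exists L => //; apply/and3P. Qed.
Lemma col3A x y z : col3 x y z = col3 x z y.
Proof. by apply/hasP/hasP => -[L LB /and3P[? ? ?]]; exists L => //; apply/and3P. Qed.

Lemma colC x y z : uniq [:: x; y; z] -> ([set x; y; z] \in collinear_triples B) = col3 x y z.
Proof.
move=> U; rewrite inE card3 //= /col3; apply: eq_has => L /=.
apply/subsetP/and3P => [H|[? ? ?] t]; first by split; apply: H; rewrite !inE eqxx ?orbT.
by rewrite !inE -orbA => /or3P[]/eqP->.
Qed.

Lemma sub3 (S : {set T}) p q r s : uniq [:: p; q; r; s] -> S \subset [set p; q; r; s] ->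
  #|S| = 3 -> [\/ S = [set p; q; r], S = [set p; q; s], S = [set p; r; s] | S = [set q; r; s]].
Proof.
move=> U /subsetP SF c3; unq U.
have key : forall x y z w, uniq [:: x; y; z] -> w \notin S ->
   (forall t, t \in S -> [|| t == x, t == y, t == z | t == w]) -> S = [set x; y; z].
  move=> x y z w Ux wS H; apply/eqP; rewrite eqEcard card3 // c3 leqnn andbT.
  apply/subsetP => t tS; have := H t tS; rewrite !inE.
  case/or4P => [->|->|->|/eqP E]; rewrite ?orbT //; by rewrite -E tS in wS.
have HF : forall t, t \in S -> [|| t == p, t == q, t == r | t == s].
  by move=> t /SF; rewrite !inE -!orbA.
have HF' : forall x y z w, (forall t, t \in [:: p; q; r; s] -> t \in [:: x; y; z; w]) ->
   forall t, t \in S -> [|| t == x, t == y, t == z | t == w].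
  move=> x y z w Hs t tS; have h := HF t tS.
  have : t \in [:: p; q; r; s] by rewrite !inE.
  by move/Hs; rewrite !inE.
case: (boolP (s \in S)) => hs.
2: by constructor 1; apply: (key _ _ _ s) => //; utac.
case: (boolP (r \in S)) => hr.
2: constructor 2; apply: (key _ _ _ r) => //; first utac.
2: by apply: HF' => t; rewrite !inE => /or4P[]->; rewrite ?orbT.
case: (boolP (q \in S)) => hq.
2: constructor 3; apply: (key _ _ _ q) => //; first utac.
2: by apply: HF' => t; rewrite !inE => /or4P[]->; rewrite ?orbT.
case: (boolP (p \in S)) => hp.
2: constructor 4; apply: (key _ _ _ p) => //; first utac.
2: by apply: HF' => t; rewrite !inE => /or4P[]->; rewrite ?orbT.
have : size [:: p; q; r; s] <= #|S|.
  by apply: sub_card => // t; rewrite !inE => /or4P[]/eqP->.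
by rewrite c3.
Qed.


Section TG.
Variables p q r s : T.
Hypothesis U : uniq [:: p; q; r; s].
Let F := [set p; q; r; s].
Let X := [set S in collinear_triples B | S \subset F].
Let T1 := [set p; q; r].
Let T2 := [set p; q; s].
Let T3 := [set p; r; s].
Let T4 := [set q; r; s].

Lemma XH : #|X| \in [:: 0; 2; 4]%N.
Proof. apply: H2g; exact: card4. Qed.

Lemma inX x y z : uniq [:: x; y; z] -> {subset [:: x; y; z] <= [:: p; q; r; s]} ->
   ([set x; y; z] \in X) = col3 x y z.
Proof.
move=> Ux sub; rewrite inE colC // andbC.
have -> : [set x; y; z] \subset F.
  apply/subsetP => t; rewrite !inE => h.
  have : t \in [:: p; q; r; s] by apply: sub; move: h; rewrite !inE -orbA.
  by rewrite !inE => /or4P[]->; rewrite ?orbT.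
by [].
Qed.

Lemma XT S : S \in X -> [\/ S = T1, S = T2, S = T3 | S = T4].
Proof.
rewrite inE => /andP[]; rewrite inE => /andP[/eqP c _] sF; exact: sub3.
Qed.

Lemma Tneq : [/\ T1 != T2, T1 != T3, T1 != T4 & T2 != T3] /\ (T2 != T4 /\ T3 != T4).
Proof.
unq U; split; [split|split].
- by apply: (setneq (w := s)); rewrite !inE ?eqxx ?orbT //; kill.
- by apply: (setneq (w := s)); rewrite !inE ?eqxx ?orbT //; kill.
- by apply: (setneq (w := s)); rewrite !inE ?eqxx ?orbT //; kill.
- by apply: (setneq (w := r)); rewrite !inE ?eqxx ?orbT //; kill.
- by apply: (setneq (w := r)); rewrite !inE ?eqxx ?orbT //; kill.
- by apply: (setneq (w := q)); rewrite !inE ?eqxx ?orbT //; kill.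
Qed.

Lemma tg3 : col3 p q r -> col3 p q s -> col3 p r s -> col3 q r s.
Proof.
move=> h1 h2 h3; apply: contraT => h4; unq U.
have [[n12 n13 n14 n23] [n24 n34]] := Tneq.
have i1 : T1 \in X by rewrite inX //; [utac|move=> t; rewrite !inE => /or3P[]->; rewrite ?orbT].
have i2 : T2 \in X by rewrite inX //; [utac|move=> t; rewrite !inE => /or3P[]->; rewrite ?orbT].
have i3 : T3 \in X by rewrite inX //; [utac|move=> t; rewrite !inE => /or3P[]->; rewrite ?orbT].
have i4 : T4 \notin X by rewrite inX //; [utac|move=> t; rewrite !inE => /or3P[]->; rewrite ?orbT].
have le : #|X| <= 3.
  have <- : #|[set T1; T2; T3]| = 3 by apply: card3; rewrite /= !inE negb_or n12 n13 n23.
  apply: subset_leq_card; apply/subsetP => S SX; rewrite !inE.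
  by case: (XT SX) => E; rewrite E ?eqxx ?orbT //; rewrite -E SX in i4.
have ge : 3 <= #|X|.
  have <- : #|[set T1; T2; T3]| = 3 by apply: card3; rewrite /= !inE negb_or n12 n13 n23.
  by apply: subset_leq_card; apply/subsetP => S h; rewrite !inE -!orbA in h; case/or3P: h => /eqP->.
have := XH; have -> : #|X| = 3 by apply/eqP; rewrite eqn_leq le ge.
by [].
Qed.

Lemma tg2 : col3 p q r -> ~~ col3 p q s -> col3 p r s || col3 q r s.
Proof.
move=> h1 h2; apply: contraT; rewrite negb_or => /andP[h3 h4]; unq U.
have [[n12 n13 n14 n23] [n24 n34]] := Tneq.
have i1 : T1 \in X by rewrite inX //; [utac|move=> t; rewrite !inE => /or3P[]->; rewrite ?orbT].
have i2 : T2 \notin X by rewrite inX //; [utac|move=> t; rewrite !inE => /or3P[]->; rewrite ?orbT].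
have i3 : T3 \notin X by rewrite inX //; [utac|move=> t; rewrite !inE => /or3P[]->; rewrite ?orbT].
have i4 : T4 \notin X by rewrite inX //; [utac|move=> t; rewrite !inE => /or3P[]->; rewrite ?orbT].
have le : #|X| <= 1.
  rewrite -(cards1 T1); apply: subset_leq_card; apply/subsetP => S SX; rewrite !inE.
  by case: (XT SX) => E; rewrite ?E ?eqxx //; rewrite -E SX in i2 i3 i4.
have ge : 1 <= #|X| by rewrite card_gt0; apply/set0Pn; exists T1.
have := XH; have -> : #|X| = 1%N by apply/eqP; rewrite eqn_leq le ge.
by [].
Qed.
End TG.


Ltac c4 := match goal with H : is_true (col4 _ _ _ _) |- is_true (col4 _ _ _ _) =>
  let L := fresh "L" in let LB := fresh in
  case/hasP: (H) => L LB /and4P[? ? ? ?]; apply/hasP; exists L; [exact LB| apply/and4P; split; assumption] end.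
Ltac c3 := match goal with
 | H : is_true (col4 _ _ _ _) |- is_true (col3 _ _ _) =>
  let L := fresh "L" in let LB := fresh in
  case/hasP: (H) => L LB /and4P[? ? ? ?]; apply/hasP; exists L; [exact LB| apply/and3P; split; assumption]
 | H : is_true (col3 _ _ _) |- is_true (col3 _ _ _) =>
  let L := fresh "L" in let LB := fresh in
  case/hasP: (H) => L LB /and3P[? ? ?]; apply/hasP; exists L; [exact LB| apply/and3P; split; assumption] end.

Ltac do_g := try (by []); try c4; try c3; try utac.

Definition sok a b (f : {perm T}) := [/\ a != b, f a = b, f b = a,
  (forall z, z != a -> z != b -> ~~ col3 a b z -> f z = z) &
  (forall z L, L \in B -> a \in L -> b \in L -> z \in L -> z != a -> z != b ->
     (f z \in L) && uniq [:: a; b; z; f z])].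

Lemma sok_sym a b f : sok a b f -> sok b a f.
Proof.
case=> ab fa fb fN fS; split => //; first by rewrite eq_sym.
- by move=> z zb za; rewrite col3C; apply: fN.
- move=> z L LB bL aL zL zb za; have /andP[-> U] := fS z L LB aL bL zL za zb.
  by unq U; utac.
Qed.

Section Sig.
Variables (a b : T) (f : {perm T}).
Hypothesis Hf : sok a b f.

Lemma Sline z : z != a -> z != b -> col3 a b z ->
  col4 a b z (f z) && uniq [:: a; b; z; f z].
Proof.
case: Hf => ab fa fb fN fS za zb /hasP[L LB /and3P[aL bL zL]].
have /andP[fL U] := fS z L LB aL bL zL za zb; rewrite U andbT.
by apply/hasP; exists L => //; apply/and4P.
Qed.

Lemma Elem x y : col4 a b x y -> uniq [:: a; b; x; y] -> y = f x.
Proof.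
case: Hf => ab fa fb fN fS /hasP[L LB /and4P[aL bL xL yL]] U; unq U.
have /andP[fL Uf] := fS x L LB aL bL xL ltac:(done) ltac:(done).
apply/eqP; apply: contraT => ne; unq Uf.
have := line_notin (u := f x) LB _ aL bL xL yL; rewrite fL; apply => //; utac.
Qed.

Lemma invol x : f (f x) = x.
Proof.
have [ab fa fb fN fS] := Hf.
case: (x =P a) => [->|/eqP xa]; first by rewrite fa fb.
case: (x =P b) => [->|/eqP xb]; first by rewrite fb fa.
case: (boolP (col3 a b x)) => hx; last by rewrite !fN.
have /andP[h U] := Sline xa xb hx; unq U.
symmetry; apply: Elem; first by c4.
utac.
Qed.

Lemma Scol z : z != a -> z != b -> col3 a b z ->
  [/\ col3 a b (f z), f z != a & f z != b].
Proof.
move=> za zb hz; have /andP[h U] := Sline za zb hz; unq U; split => //; c3.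
Qed.

Lemma Snot x y : col3 a b x -> ~~ col3 a b y -> x != y.
Proof. by move=> h1 h2; apply/eqP => E; rewrite -E h1 in h2. Qed.

Lemma Dlem p q r : col4 a p q r -> uniq [:: a; b; p; q; r] -> col3 a b p -> q != f p.
Proof.
move=> h U hp; unq U.
have /andP[hl Ul] : col4 a b p (f p) && uniq [:: a; b; p; f p] by apply: Sline.
unq Ul.
case/hasP: h => M MB /and4P[aM pM qM rM].
have bM : b \notin M by apply: (line_notin MB _ aM pM qM rM); utac.
apply/eqP => E; subst q.
case/hasP: hl => L LB /and4P[aL bL pL fL].
have EM : M = L by apply: (line_eq3 MB LB (x := a) (y := p) (z := f p)) => //; utac.
by rewrite EM bL in bM.
Qed.


Lemma A1_0 p q r : col4 a p q r -> uniq [:: a; b; p; q; r] ->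
  ~~ col3 a b p -> ~~ col3 a b q -> ~~ col3 a b r -> col4 b p q r.
Proof.
move=> M U np nq nr; unq U.
have : col3 a q b || col3 p q b.
  by apply: tg2; [utac|c3|rewrite col3A].
case/orP => [h|h]; first by rewrite col3A h in nq.
case/hasP: h => K KB /and3P[pK qK bK].
have [w wK Uw] := fourth KB (x := b) (y := p) (z := q) ltac:(utac) bK pK qK.
unq Uw.
case: (w =P r) => [E|/eqP wr]; first by subst w; apply/hasP; exists K => //; apply/and4P.
have wa : w != a.
  apply/eqP => E; subst w; have : col3 a b p by apply/hasP; exists K => //; apply/and3P.
  by rewrite (negbTE np).
have : col4 b w a r by apply: (tri (x := p) (y := q)); [apply/hasP; exists K => //; apply/and4P|c4|utac].
move=> h; have : col3 a b r by c3.
by rewrite (negbTE nr).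
Qed.

Lemma A1_1 p q r : col4 a p q r -> uniq [:: a; b; p; q; r] ->
  col3 a b p -> ~~ col3 a b q -> ~~ col3 a b r -> col4 b (f p) q r.
Proof.
move=> M U hp nq nr; unq U.
have /andP[hl Ul] : col4 a b p (f p) && uniq [:: a; b; p; f p] by apply: Sline.
have [hfp _ _] : [/\ col3 a b (f p), f p != a & f p != b] by apply: Scol.
have n1 := Snot hfp nq; have n2 := Snot hfp nr.
unq Ul.
have : col4 q r b (f p) by apply: (tri (x := a) (y := p)); do_g.
move=> h; c4.
Qed.

Lemma A1_3 p q r : col4 a p q r -> uniq [:: a; b; p; q; r] ->
  col3 a b p -> col3 a b q -> col3 a b r -> col4 b (f p) (f q) (f r).
Proof.
move=> M U hp hq hr; unq U.
have /andP[lp Up] : col4 a b p (f p) && uniq [:: a; b; p; f p] by apply: Sline.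
have /andP[lq Uq] : col4 a b q (f q) && uniq [:: a; b; q; f q] by apply: Sline.
have /andP[lr Ur] : col4 a b r (f r) && uniq [:: a; b; r; f r] by apply: Sline.
unq Up; unq Uq; unq Ur.
have d1 : q != f p by apply: (Dlem (r := r)).
have d2 : r != f p by apply: (Dlem (r := q)); do_g.
have d3 : p != f q by apply: (Dlem (r := r)); do_g.
have d4 : r != f q by apply: (Dlem (r := p)); do_g.
have d5 : p != f r by apply: (Dlem (r := q)); do_g.
have d6 : q != f r by apply: (Dlem (r := p)); do_g.
have s1 : col4 q r b (f p) by apply: (tri (x := a) (y := p)); do_g.
have s2 : col4 (f p) r a (f q) by apply: (tri (x := b) (y := q)); do_g.
have s3 : col4 (f p) (f q) b (f r) by apply: (tri (x := a) (y := r)); do_g.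
c4.
Qed.

Lemma A1_2 p q r : col4 a p q r -> uniq [:: a; b; p; q; r] ->
  col3 a b p -> col3 a b q -> ~~ col3 a b r -> col4 b (f p) (f q) r.
Proof.
move=> M U hp hq nr; unq U.
have /andP[lp Up] : col4 a b p (f p) && uniq [:: a; b; p; f p] by apply: Sline.
have /andP[lq Uq] : col4 a b q (f q) && uniq [:: a; b; q; f q] by apply: Sline.
have [hfp _ _] : [/\ col3 a b (f p), f p != a & f p != b] by apply: Scol.
have [hfq _ _] : [/\ col3 a b (f q), f q != a & f q != b] by apply: Scol.
have n1 := Snot hfp nr; have n2 := Snot hfq nr.
unq Up; unq Uq.
have d1 : q != f p by apply: (Dlem (r := r)).
have d3 : p != f q by apply: (Dlem (r := r)); do_g.
have s1 : col4 q r b (f p) by apply: (tri (x := a) (y := p)); do_g.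
have s2 : col4 (f p) r a (f q) by apply: (tri (x := b) (y := q)); do_g.
have s3 : col4 p r b (f q) by apply: (tri (x := a) (y := q)); do_g.
have : col3 b (f p) (f q) by apply: (tg3 (p := r)); [utac|c3|c3|c3].
case/hasP => K KB /and3P[bK pK qK].
have [w wK Uw] := fourth KB (x := b) (y := f p) (z := f q) ltac:(utac) bK pK qK.
unq Uw.
case: (w =P r) => [E|/eqP wr]; first by subst w; apply/hasP; exists K => //; apply/and4P.
have wa : w != a.
  apply/eqP => E; subst w.
  have e : f q = f (f p) by apply: Elem; [apply/hasP; exists K => //; apply/and4P|utac].
  by rewrite invol in e; rewrite -e invol eqxx in d1.
have : col4 b w a r by apply: (tri (x := f p) (y := f q)); [apply/hasP; exists K => //; apply/and4P|c4|utac].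
move=> h; have : col3 a b r by c3.
by rewrite (negbTE nr).
Qed.


Lemma fNS z : z != a -> z != b -> ~~ col3 a b z -> f z = z.
Proof. by case: Hf => _ _ _ fN _; apply: fN. Qed.

Lemma A1 p q r : col4 a p q r -> uniq [:: a; b; p; q; r] -> col4 b (f p) (f q) (f r).
Proof.
move=> M U; have U' := U; unq U'.
case: (boolP (col3 a b p)) => hp; case: (boolP (col3 a b q)) => hq;
  case: (boolP (col3 a b r)) => hr; rewrite ?(fNS _ _ hp) ?(fNS _ _ hq) ?(fNS _ _ hr) //.
- exact: A1_3.
- exact: A1_2.
- have : col4 b (f p) (f r) q by apply: A1_2; do_g.
  move=> h; c4.
- exact: A1_1.
- have : col4 b (f q) (f r) p by apply: A1_2; do_g.
  move=> h; c4.
- have : col4 b (f q) p r by apply: A1_1; do_g.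
  move=> h; c4.
- have : col4 b (f r) p q by apply: A1_1; do_g.
  move=> h; c4.
- exact: A1_0.
Qed.

Lemma A0 r s : col4 a b r s -> uniq [:: a; b; r; s] -> col4 b a (f r) (f s).
Proof.
move=> h U; have e := Elem h U; have [_ fa fb _ _] := Hf.
have -> : f s = r by rewrite e invol.
rewrite -e; c4.
Qed.

Lemma KA q r s : col4 a q r s -> uniq [:: a; q; r; s] -> col4 b (f q) (f r) (f s).
Proof.
move=> M U; have [ab fa fb _ _] := Hf; unq U.
case: (q =P b) => [E|/eqP qb]; first by subst q; rewrite fb; apply: A0.
case: (r =P b) => [E|/eqP rb].
  subst r; rewrite fb; have : col4 b a (f q) (f s) by apply: A0; do_g.
  move=> h; c4.
case: (s =P b) => [E|/eqP sb].
  subst s; rewrite fb; have : col4 b a (f q) (f r) by apply: A0; do_g.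
  move=> h; c4.
by apply: A1; do_g.
Qed.

Lemma G_a x y u v : col4 x y u v -> uniq [:: a; b; x; y; u; v] -> col3 a x y ->
  ~~ col3 a b y -> col4 (f x) (f y) (f u) (f v).
Proof.
move=> M U hN ny; have [ab fa fb _ _] := Hf; have U0 := U; unq U.
case/hasP: hN => N NB /and3P[aN xN yN].
have [w wN Uw] := fourth NB (x := a) (y := x) (z := y) ltac:(utac) aN xN yN.
unq Uw.
have wb : w != b.
  apply/eqP => E; subst w; have : col3 a b y by apply/hasP; exists N => //; apply/and3P.
  by rewrite (negbTE ny).
case/hasP: (M) => L LB /and4P[xL yL uL vL].
have aL : a \notin L by apply: (line_notin LB _ xL yL uL vL); utac.
have wu : w != u.
  apply/eqP => E; subst w.
  have : N = L by apply: (line_eq3 NB LB (x := x) (y := y) (z := u)) => //; utac.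
  by move=> E; rewrite -E aN in aL.
have wv : w != v.
  apply/eqP => E; subst w.
  have : N = L by apply: (line_eq3 NB LB (x := x) (y := y) (z := v)) => //; utac.
  by move=> E; rewrite -E aN in aL.
have N4 : col4 a x y w by apply/hasP; exists N => //; apply/and4P.
have M2 : col4 a w u v by apply: (tri (x := x) (y := y)); do_g.
have h1 : col4 b (f x) (f y) (f w) by apply: A1; do_g.
have h2 : col4 b (f w) (f u) (f v) by apply: A1; do_g.
have Uf : uniq [:: b; f w; f x; f y; f u; f v].
  rewrite -fa; have := map_inj_uniq (@perm_inj _ f) [:: a; w; x; y; u; v]; rewrite /= => ->.
  utac.
apply: (tri (x := b) (y := f w)); do_g.
Qed.

Lemma P2 x y u v : col4 x y u v -> uniq [:: a; b; x; y; u; v] -> col3 a b x -> y = f x ->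
  col4 (f x) (f y) (f u) (f v).
Proof.
move=> M U hx e; have [ab fa fb _ _] := Hf; have U0 := U; unq U.
have /andP[lx Ux] : col4 a b x (f x) && uniq [:: a; b; x; f x] by apply: Sline.
rewrite -e in lx.
have h : col4 u v a b by apply: (tri (x := x) (y := y)); do_g.
have e2 : v = f u by apply: Elem; do_g.
rewrite -e e2 invol -e2 e invol -e; c4.
Qed.

Lemma P4 p q r s : col4 p q r s -> uniq [:: a; b; p; q; r; s] ->
  col3 a b p -> col3 a b q -> col3 a b r -> col3 a b s ->
  f p != q -> f p != r -> f p != s -> f q != r -> f q != s -> f r != s ->
  col4 (f p) (f q) (f r) (f s).
Proof.
move=> M U hp hq hr hs d1 d2 d3 d4 d5 d6; unq U.
have /andP[lp Up] : col4 a b p (f p) && uniq [:: a; b; p; f p] by apply: Sline.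
have /andP[lq Uq] : col4 a b q (f q) && uniq [:: a; b; q; f q] by apply: Sline.
have /andP[lr Ur] : col4 a b r (f r) && uniq [:: a; b; r; f r] by apply: Sline.
have /andP[ls Us] : col4 a b s (f s) && uniq [:: a; b; s; f s] by apply: Sline.
unq Up; unq Uq; unq Ur; unq Us.
have e1 : f q != p by apply: contra d1 => /eqP <-; rewrite invol.
have e2 : f r != p by apply: contra d2 => /eqP <-; rewrite invol.
have e3 : f r != q by apply: contra d4 => /eqP <-; rewrite invol.
have e4 : f s != p by apply: contra d3 => /eqP <-; rewrite invol.
have e5 : f s != q by apply: contra d5 => /eqP <-; rewrite invol.
have e6 : f s != r by apply: contra d6 => /eqP <-; rewrite invol.
have s1 : col4 p (f p) q (f q) by apply: (tri (x := a) (y := b)); do_g.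
have s2 : col4 r s (f p) (f q) by apply: (tri (x := p) (y := q)); do_g.
have s3 : col4 r (f r) s (f s) by apply: (tri (x := a) (y := b)); do_g.
have s4 : col4 r s (f r) (f s) by c4.
apply: (tri (x := r) (y := s)); do_g.
Qed.

Lemma AS p q r s : col4 p q r s -> uniq [:: a; b; p; q; r; s] ->
  col3 a b p -> col3 a b q -> col3 a b r -> col3 a b s -> col4 (f p) (f q) (f r) (f s).
Proof.
move=> M U hp hq hr hs; have U0 := U; unq U.
case: (f p =P q) => [E|/eqP d1]; first by apply: P2; rewrite ?E.
case: (f p =P r) => [E|/eqP d2].
  have : col4 (f p) (f r) (f q) (f s) by apply: P2; do_g.
  move=> h; c4.
case: (f p =P s) => [E|/eqP d3].
  have : col4 (f p) (f s) (f q) (f r) by apply: P2; do_g.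
  move=> h; c4.
case: (f q =P r) => [E|/eqP d4].
  have : col4 (f q) (f r) (f p) (f s) by apply: P2; do_g.
  move=> h; c4.
case: (f q =P s) => [E|/eqP d5].
  have : col4 (f q) (f s) (f p) (f r) by apply: P2; do_g.
  move=> h; c4.
case: (f r =P s) => [E|/eqP d6].
  have : col4 (f r) (f s) (f p) (f q) by apply: P2; do_g.
  move=> h; c4.
exact: P4.
Qed.

End Sig.


Lemma Gl a b f x y u v : sok a b f -> col4 x y u v -> uniq [:: a; b; x; y; u; v] ->
  col3 a b x -> ~~ col3 a b y -> col4 (f x) (f y) (f u) (f v).
Proof.
move=> Hf M U hx ny; have U0 := U; unq U.
have : col3 a x y || col3 b x y by apply: tg2; do_g.
case/orP => h; first exact: (G_a Hf).
apply: (G_a (sok_sym Hf)) => //; first utac.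
by rewrite col3C.
Qed.

Lemma A2 a b f p q r s : sok a b f -> col4 p q r s -> uniq [:: a; b; p; q; r; s] ->
  col4 (f p) (f q) (f r) (f s).
Proof.
move=> Hf M U; have U0 := U; unq U.
case: (boolP (col3 a b p)) => hp.
  case: (boolP (col3 a b q)) => hq; last exact: (Gl Hf).
  case: (boolP (col3 a b r)) => hr.
    case: (boolP (col3 a b s)) => hs; first exact: (AS Hf).
    have : col4 (f p) (f s) (f q) (f r) by apply: (Gl Hf); do_g.
    move=> h; c4.
  have : col4 (f p) (f r) (f q) (f s) by apply: (Gl Hf); do_g.
  move=> h; c4.
case: (boolP (col3 a b q)) => hq.
  have : col4 (f q) (f p) (f r) (f s) by apply: (Gl Hf); do_g.
  move=> h; c4.
case: (boolP (col3 a b r)) => hr.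
  have : col4 (f r) (f p) (f q) (f s) by apply: (Gl Hf); do_g.
  move=> h; c4.
case: (boolP (col3 a b s)) => hs.
  have : col4 (f s) (f p) (f q) (f r) by apply: (Gl Hf); do_g.
  move=> h; c4.
by rewrite !(fNS Hf).
Qed.

Lemma keyL a b f p q r s : sok a b f -> col4 p q r s -> uniq [:: p; q; r; s] ->
  col4 (f p) (f q) (f r) (f s).
Proof.
move=> Hf M U; have U0 := U; unq U; have Hf' := sok_sym Hf.
have [ab fa fb _ _] := Hf.
case: (p =P a) => [E|/eqP pa]; first by subst p; rewrite fa; apply: (KA Hf).
case: (q =P a) => [E|/eqP qa].
  subst q; rewrite fa; have : col4 b (f p) (f r) (f s) by apply: (KA Hf); do_g.
  move=> h; c4.
case: (r =P a) => [E|/eqP ra].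
  subst r; rewrite fa; have : col4 b (f p) (f q) (f s) by apply: (KA Hf); do_g.
  move=> h; c4.
case: (s =P a) => [E|/eqP sa].
  subst s; rewrite fa; have : col4 b (f p) (f q) (f r) by apply: (KA Hf); do_g.
  move=> h; c4.
case: (p =P b) => [E|/eqP pb]; first by subst p; rewrite fb; apply: (KA Hf').
case: (q =P b) => [E|/eqP qb].
  subst q; rewrite fb; have : col4 a (f p) (f r) (f s) by apply: (KA Hf'); do_g.
  move=> h; c4.
case: (r =P b) => [E|/eqP rb].
  subst r; rewrite fb; have : col4 a (f p) (f q) (f s) by apply: (KA Hf'); do_g.
  move=> h; c4.
case: (s =P b) => [E|/eqP sb].
  subst s; rewrite fb; have : col4 a (f p) (f q) (f r) by apply: (KA Hf'); do_g.
  move=> h; c4.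
by apply: (A2 Hf); do_g.
Qed.

End Gen.

Lemma swap2P (T : finType) (d : T) (X : {set T}) : #|X| = 2 -> forall z,
  (z \notin X -> swap2 d X z = z) /\ (z \in X -> swap2 d X z \in X /\ swap2 d X z != z).
Proof.
move=> cX; rewrite /swap2.
case: pickP => [u uX|H0]; last by move: cX; rewrite eq_card0.
case: pickP => [v|H1]; last first.
  by move: cX; rewrite (cardsD1 u) uX eq_card0.
rewrite /= !inE => /andP[vu vX].
have EX : X = [set u; v].
  apply/eqP; rewrite eq_sym eqEcard cX cards2 eq_sym vu andbT.
  by apply/subsetP => t; rewrite !inE => /orP[]/eqP->.
move=> z; split.
  by rewrite EX !inE negb_or => /andP[zu zv]; rewrite tpermD // eq_sym.
rewrite EX !inE => /orP[]/eqP->.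
  by rewrite tpermL eqxx orbT; split => //; rewrite eq_sym.
by rewrite tpermR eqxx; split => //; rewrite eq_sym.
Qed.

Lemma pairwise_uniq (T : eqType) (r : rel T) s : uniq s ->
  {in s &, forall x y, x != y -> r x y} -> pairwise r s.
Proof.
elim: s => //= x s IH /andP[xs us] H; apply/andP; split.
  apply/allP => y ys; apply: H; rewrite ?inE ?ys ?eqxx ?orbT //.
  by apply: contraNneq xs => ->.
by apply: IH => // u v us' vs'; apply: H; rewrite inE ?us' ?vs' orbT.
Qed.

Section Prod.
Variable T : finType.
Variable d : T.

Lemma prod_out (s : seq {set T}) z : (forall X, X \in s -> #|X| = 2) ->
  (forall X, X \in s -> z \notin X) -> (\prod_(X <- s) swap2 d X) z = z.
Proof.
elim: s => [|Y s IH] c h; first by rewrite big_nil perm1.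
rewrite big_cons permM.
have [H _] := swap2P d (c Y (mem_head _ _)) z.
rewrite H; last by apply: h; rewrite mem_head.
by apply: IH => X Xs; [apply: c|apply: h]; rewrite inE Xs orbT.
Qed.

Lemma prod_in (s : seq {set T}) z X : (forall X, X \in s -> #|X| = 2) ->
  pairwise (fun X Y : {set T} => [disjoint X & Y]) s -> X \in s -> z \in X ->
  (\prod_(X <- s) swap2 d X) z = swap2 d X z.
Proof.
elim: s => // Y s IH c; rewrite pairwise_cons => /andP[/allP dY ps] XYs zX.
rewrite big_cons permM.
have cY := c Y (mem_head _ _).
have c' : forall X, X \in s -> #|X| = 2 by move=> X' Xs; apply: c; rewrite inE Xs orbT.
case: (boolP (z \in Y)) => zY.
  have EX : X = Y.
    move: XYs; rewrite inE => /orP[/eqP //|Xs].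
    by have := disjointFr (dY X Xs) zY; rewrite zX.
  subst X; have [_ /(_ zY) [wY _]] := swap2P d cY z.
  apply: prod_out => // X' Xs; by rewrite (disjointFr (dY X' Xs) wY).
have [H _] := swap2P d cY z; rewrite H //.
apply: IH => //; move: XYs; rewrite inE => /orP[/eqP E|//].
by subst X; rewrite zX in zY.
Qed.
End Prod.

Section Final.
Variable T : finType.
Variable B : seq {set T}.
Hypothesis H4 : forall L, L \in B -> #|L| = 4.
Hypothesis Hss : forall L1 L2, L1 \in B -> L2 \in B -> L1 != L2 -> #|L1 :&: L2| <= 2.
Hypothesis uB : uniq B.
Hypothesis Htri : prop_triangle B.
Hypothesis H2g : forall F : {set T}, #|F| = 4 ->
      #|[set S in collinear_triples B | S \subset F]| \in [:: 0; 2; 4]%N.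

Section Brk.
Variables a b : T.
Hypothesis ab : a != b.
Let s := [seq L :\: [set a; b] | L : {set T} <- [seq L : {set T} <- B | (a \in L) && (b \in L)]].

Lemma brkE : brk B a b = tperm a b * \prod_(X <- s) swap2 a X.
Proof. by rewrite /brk (negbTE ab) big_map big_filter. Qed.

Lemma s_mem X : X \in s -> exists2 L, L \in B & [/\ a \in L, b \in L & X = L :\: [set a; b]].
Proof. by case/mapP => L; rewrite mem_filter => /andP[/andP[aL bL] LB] ->; exists L. Qed.

Lemma s_card X : X \in s -> #|X| = 2.
Proof.
case/s_mem => L LB [aL bL ->]; rewrite cardsD H4 //.
have -> : L :&: [set a; b] = [set a; b].
  by apply/setIidPr/subsetP => t; rewrite !inE => /orP[]/eqP->.
by rewrite cards2 ab.
Qed.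

Lemma s_pair : pairwise (fun X Y : {set T} => [disjoint X & Y]) s.
Proof.
rewrite pairwise_map; apply: pairwise_uniq; first exact: filter_uniq.
move=> L1 L2; rewrite !mem_filter => /andP[/andP[a1 b1] L1B] /andP[/andP[a2 b2] L2B] ne /=.
rewrite -setI_eq0; apply/eqP/setP => t; rewrite !inE.
apply/negP => /andP[/andP[tab t1] /andP[_ t2]].
have := Hss L1B L2B ne; move: tab; rewrite negb_or => /andP[ta tb].
have : size [:: a; b; t] <= #|L1 :&: L2|.
  apply: sub_card; first by rewrite /= !inE negb_or ab eq_sym ta eq_sym tb.
  by move=> u; rewrite !inE => /or3P[]/eqP->; rewrite ?a1 ?a2 ?b1 ?b2 ?t1 ?t2.
by move=> h1 h2; have := leq_trans h1 h2.
Qed.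

Lemma brk_sok : sok B a b (brk B a b).
Proof.
have nab : forall X, X \in s -> (a \notin X) && (b \notin X).
  by move=> X /s_mem [L _ [_ _ ->]]; rewrite !inE !eqxx /= orbT.
split => //.
- rewrite brkE permM tpermL prod_out //; first exact: s_card.
  by move=> X /nab /andP[].
- rewrite brkE permM tpermR prod_out //; first exact: s_card.
  by move=> X /nab /andP[].
- move=> z za zb nz; rewrite brkE permM tpermD 1?eq_sym //.
  apply: prod_out; first exact: s_card.
  move=> X /s_mem [L LB [aL bL ->]]; rewrite !inE negb_and negbK.
  apply/orP; right; apply: contra nz => zL; apply/hasP; exists L => //; by apply/and3P; split.
- move=> z L LB aL bL zL za zb.
  have Xs : L :\: [set a; b] \in s by apply: map_f; rewrite mem_filter aL bL LB.
  have zX : z \in L :\: [set a; b] by rewrite !inE negb_or za zb.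
  rewrite brkE permM tpermD 1?eq_sym // (prod_in _ s_card s_pair Xs zX).
  have [_ /(_ zX) [] ] := swap2P a (s_card Xs) z.
  rewrite !inE negb_or => /andP[/andP[wa wb] wL] wz; rewrite wL /= !inE negb_or.
  by rewrite ab !negb_or (eq_sym a z) za (eq_sym b z) zb (eq_sym a) wa (eq_sym b) wb eq_sym wz.
Qed.
End Brk.


Lemma imB a b (f : {perm T}) M : sok B a b f -> M \in B -> [set f x | x in M] \in B.
Proof.
move=> Hf MB.
have : size (enum M) = 4 by rewrite -cardE H4.
have mE : forall x, (x \in M) = (x \in enum M) by move=> x; rewrite mem_enum.
have Ue := enum_uniq M.
case E : (enum M) => [|p [|q [|r [|t [|? ?]]]]] //= _.
rewrite E in mE Ue.
have M4 : col4 B p q r t.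
  apply/hasP; exists M => //; rewrite !mE !inE !eqxx ?orbT //.
have := keyL H4 Hss Htri H2g Hf M4 Ue.
case/hasP => L LB /and4P[pL qL rL tL].
have -> : [set f x | x in M] = L.
  apply/eqP; rewrite eqEcard card_imset; last exact: perm_inj.
  rewrite H4 // -(H4 MB) leqnn andbT.
  apply/subsetP => y /imsetP [x]; rewrite mE !inE => /or4P[]/eqP-> ->; by [].
by [].
Qed.

Definition autB := [set g : {perm T} | all (fun L : {set T} => [set g x | x in L] \in B) B].

Lemma autB_group : group_set autB.
Proof.
apply/group_setP; split.
  rewrite inE; apply/allP => L LB.
  by have -> : [set (1 : {perm T}) x | x in L] = L by rewrite -[RHS]imset_id; apply: eq_imset => x; rewrite perm1.
move=> x y; rewrite !inE => /allP hx /allP hy; apply/allP => L LB.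
have -> : [set (x * y) z | z in L] = [set y z | z in [set x z | z in L]].
  by rewrite -imset_comp; apply: eq_imset => z; rewrite permM.
by apply: hy; apply: hx.
Qed.

Canonical autG := Group autB_group.

Lemma brk_aut a b : brk B a b \in autB.
Proof.
case: (a =P b) => [<-|/eqP ab]; first by rewrite /brk eqxx group1.
rewrite inE; apply/allP => L LB; apply: (imB (brk_sok ab)) => //.
Qed.

Lemma col3g g x y z : g \in autB -> col3 B x y z -> col3 B (g x) (g y) (g z).
Proof.
rewrite inE => /allP hg /hasP[L LB /and3P[xL yL zL]].
apply/hasP; exists [set g x | x in L]; first exact: hg.
by rewrite !imset_f.
Qed.

Lemma transport g x y : g \in autB -> brk B x y ^ g = brk B (g x) (g y).
Proof.
move=> gA.
case: (x =P y) => [<-|/eqP xy]; first by rewrite /brk !eqxx conj1g.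
have gxy : g x != g y by rewrite (inj_eq perm_inj).
have [_ fa fb fN fS] := brk_sok xy.
have [_ ga gb gN gS] := brk_sok gxy.
apply/permP => w; rewrite conjgE !permM.
set z := g^-1 w; have -> : w = g z by rewrite /z permKV.
case: (z =P x) => [->|/eqP zx]; first by rewrite fa ga.
case: (z =P y) => [->|/eqP zy]; first by rewrite fb gb.
have gzx : g z != g x by rewrite (inj_eq perm_inj).
have gzy : g z != g y by rewrite (inj_eq perm_inj).
case: (boolP (col3 B x y z)) => hz; last first.
  rewrite fN // gN //; apply: contra hz => h.
  have := col3g (groupVr gA) h; by rewrite !permK.
case/hasP: hz => L LB /and3P[xL yL zL].
have /andP[fL U1] := fS z L LB xL yL zL zx zy.
have gLB : [set g t | t in L] \in B by rewrite inE in gA; exact: (allP gA).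
have /andP[gL U2] := gS (g z) _ gLB (imset_f _ xL) (imset_f _ yL) (imset_f _ zL) gzx gzy.
apply/eqP; apply: contraT => ne.
have gfL : g (brk B x y z) \in [set g t | t in L] by rewrite imset_f.
have := line_notin H4 gLB (u := g (brk B x y z)) _ (imset_f _ xL) (imset_f _ yL) (imset_f _ zL) gL.
rewrite gfL; apply => //.
unq U1; unq U2; rewrite /= !inE !(inj_eq perm_inj); kill.
by [].
Qed.

End Final.

Unset Implicit Arguments.

Theorem lemma4p6 (T : finType) (B : seq {set T}) (lam : nat) :
  is_2design_4 B lam ->
  supersimple B ->
  prop_triangle B ->
  regular_two_graph (collinear_triples B) ->
  forall g : {perm T}, g \in <<brkset B>> ->
  forall x y : T, brk B x y ^ g = brk B (g x) (g y).
Proof.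
move=> [H4 _] Hsup Htri [_ [_ H2g]].
have uB : uniq B.
  apply: contraT => /(uniqPn set0) [i [j [ij jB E]]].
  have iB : i < size B by apply: ltn_trans jB.
  have := Hsup i j iB jB (negbT (ltn_eqF ij)); rewrite E setIid H4 //; exact: mem_nth.
have Hss : forall L1 L2, L1 \in B -> L2 \in B -> L1 != L2 -> #|L1 :&: L2| <= 2.
  move=> L1 L2 L1B L2B ne.
  have := Hsup (index L1 B) (index L2 B); rewrite !index_mem !nth_index //; apply => //.
  by apply: contra ne => /eqP E; rewrite -(nth_index set0 L1B) E nth_index.
have H2g' : forall F : {set T}, #|F| = 4 ->
      #|[set S in collinear_triples B | S \subset F]| \in [:: 0; 2; 4]%N.
  by move=> F cF; apply: H2g.
move=> g gG x y; apply: transport => //.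
have : <<brkset B>> \subset autG B.
  by rewrite gen_subG; apply/subsetP => h /imset2P [a b _ _ ->]; apply: brk_aut.
by move/subsetP; apply.
Qed.
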